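(* Let $\beta\ge1$ and consider the GBDF3 coefficients $(a_0,a_1,a_2)=\big(\tfrac{3\beta^2+6\beta+2}{6},\tfrac{-6\beta^2-6\beta+5}{6},\tfrac{3\beta^2-1}{6}\big)$, $(b_0,\dots,b_3)=\big(\tfrac{\beta^2+\beta}{2},1-\beta^2,\tfrac{\beta^2-\beta}{2},0\big)$, $(c_0,c_1,c_2)=\big(\tfrac{\beta^2+3\beta+2}{2},-2\beta-\beta^2,\tfrac{\beta^2+\beta}{2}\big)$. Then $$\sigma_{\mathrm{F}}=1,\quad\sigma_{\mathrm{E}}=\frac{6\beta^2+12\beta+3}{6\beta^2+6\beta-2},\quad\frac{6\beta^2-4}{6\beta^2+6\beta-2}\le\lambda_{\mathrm{I}}\le\frac{6\beta^2-3}{6\beta^2+6\beta-2},$$ so that $\dfrac{6\beta^2-4}{6\beta^2+12\beta+3}\le\mathfrak{I}_{\mathrm{IE}}\le\dfrac{6\beta^2-3}{6\beta^2+12\beta+3}$.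
   Context: For coefficient vectors $(a_j)_{j=0}^{\mathrm{k}-1}$, $(b_j)_{j=0}^{\mathrm{k}}$, $(c_j)_{j=0}^{\mathrm{k}-1}$ define $a(\theta)=\sum_j a_je^{\imath j\theta}$, $b(\theta)=\sum_j b_je^{\imath j\theta}$, $c(\theta)=\sum_jc_je^{\imath j\theta}$ and $\sigma_{\mathrm{F}}=\max_{\theta\in[0,2\pi)}|1/a(\theta)|$, $\sigma_{\mathrm{E}}=\max_{\theta\in[0,2\pi)}|c(\theta)/a(\theta)|$, $\lambda_{\mathrm{I}}=\min_{\theta\in[0,2\pi)}\Re[b(\theta)/a(\theta)]$, $\mathfrak{I}_{\mathrm{IE}}=\lambda_{\mathrm{I}}/\sigma_{\mathrm{E}}$. Here $\mathrm{k}=3$. *)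

(* Defs.v *)
From Stdlib Require Import Reals List.
From Coquelicot Require Import Coquelicot.
Open Scope R_scope.

Definition cexpi (x : R) : C := (cos x, sin x).

Fixpoint trig_aux (l : list R) (j0 : nat) (theta : R) : C :=
  match l with
  | nil => 0%C
  | x :: l' => Cplus (Cmult (RtoC x) (cexpi (INR j0 * theta))) (trig_aux l' (S j0) theta)
  end.

(* p(theta) = sum_{j=0}^{length l - 1} l_j e^{i j theta} *)
Definition trig (l : list R) (theta : R) : C := trig_aux l 0 theta.

Definition is_max_on_circle (f : R -> R) (v : R) : Prop :=
  (exists t, 0 <= t < 2 * PI /\ f t = v) /\
  (forall t, 0 <= t < 2 * PI -> f t <= v).

Definition is_min_on_circle (f : R -> R) (v : R) : Prop :=
  (exists t, 0 <= t < 2 * PI /\ f t = v) /\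
  (forall t, 0 <= t < 2 * PI -> v <= f t).

Definition gbdf3_a (be : R) : list R :=
  ((3*be^2 + 6*be + 2)/6) :: ((-6*be^2 - 6*be + 5)/6) :: ((3*be^2 - 1)/6) :: nil.
Definition gbdf3_b (be : R) : list R :=
  ((be^2 + be)/2) :: (1 - be^2) :: ((be^2 - be)/2) :: 0 :: nil.
Definition gbdf3_c (be : R) : list R :=
  ((be^2 + 3*be + 2)/2) :: (-2*be - be^2) :: ((be^2 + be)/2) :: nil.

(* the functions whose max / min define sigma_F, sigma_E, lambda_I *)
Definition fF (a : list R) (t : R) : R := Cmod (Cinv (trig a t)).
Definition fE (a c : list R) (t : R) : R := Cmod (Cdiv (trig c t) (trig a t)).
Definition fI (a b : list R) (t : R) : R := fst (Cdiv (trig b t) (trig a t)).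

(* Main.v *)
Require Import Defs.
From Stdlib Require Import Reals List Lra Psatz.
From Coquelicot Require Import Coquelicot.
Open Scope R_scope.

Lemma trig3 (p0 p1 p2 t : R) :
  trig (p0 :: p1 :: p2 :: nil) t =
  (p0 + p1 * cos t + p2 * (2 * cos t ^ 2 - 1), sin t * (p1 + 2 * p2 * cos t)).
Proof.
  unfold trig; simpl; unfold cexpi.
  rewrite cos_2a_cos, sin_2a, Rmult_0_l, cos_0, sin_0, !Rmult_1_l.
  apply injective_projections; simpl; ring.
Qed.

Lemma trig4 (p0 p1 p2 t : R) :
  trig (p0 :: p1 :: p2 :: 0 :: nil) t =
  (p0 + p1 * cos t + p2 * (2 * cos t ^ 2 - 1), sin t * (p1 + 2 * p2 * cos t)).
Proof.
  unfold trig; simpl; unfold cexpi.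
  rewrite cos_2a_cos, sin_2a, Rmult_0_l, cos_0, sin_0, !Rmult_1_l.
  apply injective_projections; simpl; ring.
Qed.

Definition Kb be := be^4+2*be^3+be^2/3-2*be/3-2/9.
Definition Ab be := be^4+4*be^3+5*be^2+2*be.
Definition Mb be := be^4+be^3-5*be^2/6-be/2.
Definition Qf be x := 1 + (1-x)/6 + Kb be * (1-x)^2.
Definition Cf be x := 1 + Ab be * (1-x)^2.
Definition Nf be x := 1 - (1-x)/6 + Mb be * (1-x)^2.

Lemma sc t : sin t * sin t = 1 - cos t * cos t.
Proof. pose proof (sin2_cos2 t) as h; unfold Rsqr in h; lra. Qed.

Lemma a_sq be t : fst (trig (gbdf3_a be) t) ^ 2 + snd (trig (gbdf3_a be) t) ^ 2 = Qf be (cos t).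
Proof.
  unfold gbdf3_a; rewrite trig3; simpl fst; simpl snd.
  apply Rminus_diag_uniq.
  set (a1 := (-6*be^2 - 6*be + 5)/6). set (a2 := (3*be^2 - 1)/6).
  replace (_ - _) with ((sin t * sin t - (1 - cos t * cos t)) * (a1 + 2*a2*cos t)^2)
    by (unfold Qf, Kb, a1, a2; field).
  rewrite sc; ring.
Qed.

Lemma c_sq be t : fst (trig (gbdf3_c be) t) ^ 2 + snd (trig (gbdf3_c be) t) ^ 2 = Cf be (cos t).
Proof.
  unfold gbdf3_c; rewrite trig3; simpl fst; simpl snd.
  apply Rminus_diag_uniq.
  set (a1 := (-2*be - be^2)). set (a2 := (be^2 + be)/2).
  replace (_ - _) with ((sin t * sin t - (1 - cos t * cos t)) * (a1 + 2*a2*cos t)^2)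
    by (unfold Cf, Ab, a1, a2; field).
  rewrite sc; ring.
Qed.

Lemma n_eq be t : fst (trig (gbdf3_b be) t) * fst (trig (gbdf3_a be) t)
   + snd (trig (gbdf3_b be) t) * snd (trig (gbdf3_a be) t) = Nf be (cos t).
Proof.
  unfold gbdf3_a, gbdf3_b; rewrite trig3, trig4; simpl fst; simpl snd.
  apply Rminus_diag_uniq.
  set (a1 := (-6*be^2 - 6*be + 5)/6). set (a2 := (3*be^2 - 1)/6).
  set (b1 := 1 - be^2). set (b2 := (be^2 - be)/2).
  replace (_ - _) with ((sin t * sin t - (1 - cos t * cos t)) * ((a1 + 2*a2*cos t)*(b1 + 2*b2*cos t)))
    by (unfold Nf, Mb, a1, a2, b1, b2; field).
  rewrite sc; ring.
Qed.

Lemma Kpos be : 1 <= be -> 0 < Kb be.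
Proof. intro h; unfold Kb.
  assert (be <= be^2) by nra.
  assert (1 <= be^3) by (replace (be^3) with (be*be^2) by ring; nra).
  assert (1 <= be^4) by (replace (be^4) with (be*be^3) by ring; nra).
  nra. Qed.

Lemma Qge1 be x : 1 <= be -> x <= 1 -> 1 <= Qf be x.
Proof. intros h hx; pose proof (Kpos be h); unfold Qf.
  assert (0 <= Kb be * (1-x)^2) by (apply Rmult_le_pos; [lra| apply pow2_ge_0]).
  lra. Qed.

Lemma Gineq be x : 1 <= be -> -1 <= x <= 1 ->
  (6*be^2+6*be-2)^2 * Cf be x <= (6*be^2+12*be+3)^2 * Qf be x.
Proof.
  intros h hx.
  set (y := 1 - x).
  assert (hy: 0 <= y <= 2) by (unfold y; lra).
  assert (e: (6*be^2+12*be+3)^2 * Qf be x - (6*be^2+6*be-2)^2 * Cf be x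
    = (2 - y) * ((2+30*be+57*be^2+30*be^3+3*be^4) * y + (5/2 + 48*be + 84*be^2 + 36*be^3)))
    by (unfold Qf, Cf, Kb, Ab, y; field).
  assert (0 <= (2 - y) * ((2+30*be+57*be^2+30*be^3+3*be^4) * y + (5/2 + 48*be + 84*be^2 + 36*be^3))).
  { apply Rmult_le_pos; [lra|].
    assert (0 <= be^2) by nra.
    assert (0 <= be^3) by (replace (be^3) with (be*be^2) by ring; nra).
    assert (0 <= be^4) by (replace (be^4) with (be*be^3) by ring; nra).
    nra. }
  lra.
Qed.

Lemma Hineq be x : 1 <= be -> -1 <= x <= 1 ->
  (6*be^2-4) * Qf be x <= (6*be^2+6*be-2) * Nf be x.
Proof.
  intros h hx.
  set (y := 1 - x).
  assert (hy: 0 <= y <= 2) by (unfold y; lra).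
  set (p := be^4+2*be^3+4/3*be^2-5/3*be-8/9).
  set (q := 2*be^2+be-1).
  set (r := 2 + 6*be).
  assert (e: (6*be^2+6*be-2) * Nf be x - (6*be^2-4) * Qf be x = r - q*y + p*y^2)
    by (unfold Qf, Nf, Kb, Mb, y, p, q, r; field).
  assert (pp: 0 < p) by (unfold p; nra).
  assert (d: 0 <= 4*p*r - q^2).
  { unfold p, q, r. assert (0 <= be - 1) by lra. assert (0 <= (be-1)^2) by nra.
    assert (0 <= (be-1)^3) by (simpl; nra). assert (0 <= (be-1)^4) by nra.
    assert (0 <= (be-1)^5) by (simpl; nra). nra. }
  assert (e2: 4*p*(r - q*y + p*y^2) = (2*p*y - q)^2 + (4*p*r - q^2)) by ring.
  assert (0 <= r - q*y + p*y^2).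
  { apply (Rmult_le_reg_l (4*p)); [lra|]. rewrite Rmult_0_r, e2.
    pose proof (pow2_ge_0 (2*p*y-q)); lra. }
  lra.
Qed.

Lemma a_nz be t : 1 <= be -> trig (gbdf3_a be) t <> 0%C.
Proof.
  intros h e. pose proof (a_sq be t) as q. rewrite e in q. simpl in q.
  pose proof (Qge1 be (cos t) h (proj2 (COS_bound t))). lra.
Qed.

Lemma fF_eq be t : 1 <= be -> fF (gbdf3_a be) t = / sqrt (Qf be (cos t)).
Proof.
  intro h. unfold fF. rewrite Cmod_inv by (apply a_nz; auto). unfold Cmod. rewrite a_sq. reflexivity.
Qed.

Lemma fE_eq be t : 1 <= be -> fE (gbdf3_a be) (gbdf3_c be) t = sqrt (Cf be (cos t)) / sqrt (Qf be (cos t)).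
Proof.
  intro h. unfold fE. rewrite Cmod_div by (apply a_nz; auto). unfold Cmod. rewrite a_sq, c_sq. reflexivity.
Qed.

Lemma fI_eq be t : 1 <= be -> fI (gbdf3_a be) (gbdf3_b be) t = Nf be (cos t) / Qf be (cos t).
Proof.
  intro h. unfold fI. rewrite <- a_sq, <- n_eq.
  pose proof (a_sq be t) as q. pose proof (Qge1 be (cos t) h (proj2 (COS_bound t))).
  destruct (trig (gbdf3_a be) t) as [u v]. destruct (trig (gbdf3_b be) t) as [w z].
  simpl in *. unfold Cdiv, Cmult, Cinv. simpl. field. lra.
Qed.

Lemma g_cont be c : 1 <= be -> -1 <= c <= 1 -> continuity_pt (fun x => Nf be x / Qf be x) c.
Proof.
  intros h hc. pose proof (Qge1 be c h (proj2 hc)).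
  apply derivable_continuous_pt. unfold Nf, Qf. reg. unfold Qf in H. lra.
Qed.

Theorem mainTheorem7 (be : R) (hbe : 1 <= be) :
  let a := gbdf3_a be in
  let b := gbdf3_b be in
  let c := gbdf3_c be in
  (forall t, 0 <= t < 2 * PI -> trig a t <> 0%C) /\
  is_max_on_circle (fF a) 1 /\
  is_max_on_circle (fE a c) ((6*be^2 + 12*be + 3) / (6*be^2 + 6*be - 2)) /\
  exists lamI : R,
    is_min_on_circle (fI a b) lamI /\
    (6*be^2 - 4) / (6*be^2 + 6*be - 2) <= lamI <= (6*be^2 - 3) / (6*be^2 + 6*be - 2) /\
    (6*be^2 - 4) / (6*be^2 + 12*be + 3)
      <= lamI / ((6*be^2 + 12*be + 3) / (6*be^2 + 6*be - 2))
      <= (6*be^2 - 3) / (6*be^2 + 12*be + 3).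
Proof.
  intros a b c.
  pose proof PI_RGT_0 as hpi.
  assert (hD: 10 <= 6*be^2 + 6*be - 2) by nra.
  assert (hE: 21 <= 6*be^2 + 12*be + 3) by nra.
  assert (hQm: Qf be (-1) = ((6*be^2 + 6*be - 2)/3)^2) by (unfold Qf, Kb; field).
  assert (hCm: Cf be (-1) = ((6*be^2 + 12*be + 3)/3)^2) by (unfold Cf, Ab; field).
  assert (hNm: Nf be (-1) / Qf be (-1) = (6*be^2 - 3) / (6*be^2 + 6*be - 2)).
  { rewrite hQm. unfold Nf, Mb. field. lra. }
  split; [intros t _; apply a_nz; auto|].
  split.
  { split.
    - exists 0. split; [lra|]. unfold a. rewrite fF_eq, cos_0 by auto.
      replace (Qf be 1) with 1 by (unfold Qf; field). rewrite sqrt_1. apply Rinv_1.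
    - intros t _. unfold a. rewrite fF_eq by auto.
      pose proof (Qge1 be (cos t) hbe (proj2 (COS_bound t))).
      assert (1 <= sqrt (Qf be (cos t))) by (rewrite <- sqrt_1; apply sqrt_le_1_alt; lra).
      rewrite <- Rinv_1. apply Rinv_le_contravar; lra. }
  split.
  { split.
    - exists PI. split; [lra|]. unfold a, c. rewrite fE_eq, cos_PI by auto.
      rewrite hQm, hCm, !sqrt_pow2 by lra. field. lra.
    - intros t _. unfold a, c. rewrite fE_eq by auto.
      pose proof (COS_bound t) as hc.
      pose proof (Qge1 be (cos t) hbe (proj2 hc)).
      pose proof (Gineq be (cos t) hbe hc).
      assert (0 <= Cf be (cos t)) by (unfold Cf, Ab;
        assert (0 <= be^2) by nra;
        assert (0 <= be^3) by (replace (be^3) with (be*be^2) by ring; nra);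
        assert (0 <= be^4) by (replace (be^4) with (be*be^3) by ring; nra);
        assert (0 <= (1 - cos t)^2) by apply pow2_ge_0; nra).
      rewrite <- sqrt_div_alt by lra.
      rewrite <- (sqrt_pow2 ((6 * be ^ 2 + 12 * be + 3) / (6 * be ^ 2 + 6 * be - 2))).
      2: { apply Rlt_le, Rdiv_lt_0_compat; lra. }
      apply sqrt_le_1_alt.
      apply Rminus_le_0.
      replace (((6 * be ^ 2 + 12 * be + 3) / (6 * be ^ 2 + 6 * be - 2)) ^ 2 - Cf be (cos t) / Qf be (cos t))
        with (((6*be^2+12*be+3)^2 * Qf be (cos t) - (6*be^2+6*be-2)^2 * Cf be (cos t))
              * / ((6*be^2+6*be-2)^2 * Qf be (cos t))) by (field; lra).
      apply Rmult_le_pos; [lra|].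
      apply Rlt_le, Rinv_0_lt_compat. apply Rmult_lt_0_compat; [nra|lra]. }
  destruct (continuity_ab_min (fun x => Nf be x / Qf be x) (-1) 1) as [mx [hmin hmx]].
  { lra. }
  { intros; apply g_cont; auto. }
  exists (Nf be mx / Qf be mx).
  assert (hQ: 1 <= Qf be mx) by (apply Qge1; lra).
  assert (lo: (6*be^2 - 4) / (6*be^2 + 6*be - 2) <= Nf be mx / Qf be mx).
  { pose proof (Hineq be mx hbe hmx).
    apply Rminus_le_0.
    replace (Nf be mx / Qf be mx - (6*be^2 - 4) / (6*be^2 + 6*be - 2))
      with (((6*be^2+6*be-2) * Nf be mx - (6*be^2-4) * Qf be mx) * / ((6*be^2+6*be-2) * Qf be mx))
      by (field; lra).
    apply Rmult_le_pos; [lra|].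
    apply Rlt_le, Rinv_0_lt_compat. apply Rmult_lt_0_compat; lra. }
  assert (hi: Nf be mx / Qf be mx <= (6*be^2 - 3) / (6*be^2 + 6*be - 2)).
  { rewrite <- hNm. apply hmin. lra. }
  split.
  { split.
    - exists (acos mx). pose proof (acos_bound mx). split; [lra|].
      unfold a, b. rewrite fI_eq, cos_acos by (auto; lra). reflexivity.
    - intros t _. unfold a, b. rewrite fI_eq by auto. apply hmin. apply COS_bound. }
  split; [lra|].
  set (l := Nf be mx / Qf be mx) in *.
  split.
  - apply Rminus_le_0.
    replace (l / ((6 * be ^ 2 + 12 * be + 3) / (6 * be ^ 2 + 6 * be - 2)) - (6 * be ^ 2 - 4) / (6 * be ^ 2 + 12 * be + 3))
      with ((l - (6*be^2 - 4) / (6*be^2 + 6*be - 2)) * ((6 * be ^ 2 + 6 * be - 2) / (6 * be ^ 2 + 12 * be + 3)))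
      by (field; lra).
    apply Rmult_le_pos; [lra|]. apply Rlt_le, Rdiv_lt_0_compat; lra.
  - apply Rminus_le_0.
    replace ((6 * be ^ 2 - 3) / (6 * be ^ 2 + 12 * be + 3) - l / ((6 * be ^ 2 + 12 * be + 3) / (6 * be ^ 2 + 6 * be - 2)))
      with (((6*be^2 - 3) / (6*be^2 + 6*be - 2) - l) * ((6 * be ^ 2 + 6 * be - 2) / (6 * be ^ 2 + 12 * be + 3)))
      by (field; lra).
    apply Rmult_le_pos; [lra|]. apply Rlt_le, Rdiv_lt_0_compat; lra.
Qed.
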